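(* Let $\mathfrak{f}_r$ denote the free $2$-step nilpotent Lie algebra of rank $r\ge2$. (i) If $r\equiv0$ or $3\pmod 4$, then $\mathfrak{f}_r$ admits a complex structure. (ii) If $r\equiv1$ or $2\pmod 4$, then the Lie algebra $\mathbb{R}\oplus\mathfrak{f}_r$ (direct sum with a one-dimensional abelian Lie algebra) admits a complex structure.
   Context: For a real vector space $V$ of dimension $r$, the free $2$-step nilpotent Lie algebra of rank $r$ is $\mathfrak{f}_r=V\oplus\Lambda^2(V)$ with Lie bracket $[v,w]=v\wedge w$ for $v,w\in V$ and $\Lambda^2(V)$ central. A complex structure on a real Lie algebra $\mathfrak{g}$ is a linear map $J:\mathfrak{g}\to\mathfrak{g}$ with $J^2=-I$ and $N_J(x,y):=[x,y]+J([Jx,y]+[x,Jy])-[Jx,Jy]=0$ for all $x,y\in\mathfrak{g}$. *)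

(* Defs.v *)
From HB Require Import structures.
From mathcomp Require Import all_boot all_order all_algebra.
From mathcomp Require Import reals.
Set Implicit Arguments. Unset Strict Implicit. Unset Printing Implicit Defensive.
Import Order.TTheory GRing.Theory Num.Theory.
Local Open Scope ring_scope.

(* Index set of the standard basis e_i ^ e_j (i < j) of Lambda^2(R^r). *)
Definition pairs (r : nat) : finType := {p : 'I_r * 'I_r | (p.1 < p.2)%N}.

(* Basis index set of f_r = V (+) Lambda^2 V, V = R^r:
   inl i  <-> e_i,   inr (i,j) <-> e_i ^ e_j (i<j). *)
Definition free2_idx (r : nat) : finType := ('I_r + pairs r)%type.

Notation vec R T := {ffun T -> (R : realType)^o}.

(* Lie bracket of the free 2-step nilpotent Lie algebra f_r:
   [v + a, w + b] = v ^ w, whose (i,j)-coordinate is v_i w_j - v_j w_i. *)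
Definition free2_bracket (R : realType) (r : nat)
  (x y : vec R (free2_idx r)) : vec R (free2_idx r) :=
  [ffun k => match k with
             | inl _ => 0
             | inr p => x (inl (sval p).1) * y (inl (sval p).2)
                        - x (inl (sval p).2) * y (inl (sval p).1)
             end].

(* R (+) f_r : the extra basis vector (None) is central and the bracket
   takes values in f_r. *)
Definition sum_idx (r : nat) : finType := option (free2_idx r).

Definition sum_bracket (R : realType) (r : nat)
  (x y : vec R (sum_idx r)) : vec R (sum_idx r) :=
  let x' := [ffun k => x (Some k)] in
  let y' := [ffun k => y (Some k)] in
  [ffun k => match k with
             | None => 0
             | Some k' => free2_bracket x' y' k'
             end].

Definition complex_structure (R : realType) (T : finType)
  (br : vec R T -> vec R T -> vec R T) (J : vec R T -> vec R T) : Prop :=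
  linear J /\
  (forall x, J (J x) = - x) /\
  (forall x y, br x y + J (br (J x) y + br x (J y)) - br (J x) (J y) = 0).

(* Main.v *)
Require Import Defs.
From HB Require Import structures.
From mathcomp Require Import all_boot all_order all_algebra.
From mathcomp Require Import reals.
From mathcomp Require Import zify ring.
From Stdlib Require Import FunctionalExtensionality.
Import Order.TTheory GRing.Theory Num.Theory.
Local Open Scope ring_scope.

Definition flip (v : nat) := if odd v then v.-1 else v.+1.
Definition sel (r t : nat) : nat * nat :=
  if (t < r./2)%N then (t.*2, t.*2.+1) else (t + r./2, t + r./2)%N.
Definition tauN (r : nat) (c : nat * nat) : nat * nat :=
  let: (a, b) := c in
  if a == b then (if (a < (r./2).*2)%N then (flip a, flip a) else sel r (flip (a - r./2)))
  else if b == flip a then sel r (flip a./2)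
  else if (b < (r./2).*2)%N then (a, flip b) else (flip a, b).
Definition sgn {R : ringType} (v : nat) : R := if odd v then 1 else -1.
Definition epsN (R : ringType) (r : nat) (c : nat * nat) : R :=
  let: (a, b) := c in
  if a == b then (if (a < (r./2).*2)%N then sgn a else sgn (a - r./2))
  else if b == flip a then sgn a./2
  else if (b < (r./2).*2)%N then sgn b else sgn a.
Definition validN (r ext : nat) (c : nat * nat) : bool :=
  ((c.1 < c.2) && (c.2 < r))%N || ((c.1 == c.2) && (c.1 < r + ext))%N.

Lemma sgn_flip (R : ringType) v : sgn (flip v) = - sgn v :> R.
Proof. rewrite /sgn /flip; case: (boolP (odd v)) => h.
- have -> : odd v.-1 = false by lia. by [].
- have -> : odd v.+1 = true by lia. by rewrite opprK.
Qed.

Lemma tau_prop r ext c : ~~ odd (r./2 + odd r + ext) -> validN r ext c ->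
  validN r ext (tauN r c) /\ tauN r (tauN r c) = c.
Proof.
move=> hc; case: c => a b; rewrite /validN /tauN /sel /flip /=.
repeat (case: ifP => /=); try lia.
all: repeat (case: ifP => /=); try lia.
all: intros; split; [lia | congr pair; lia].
Qed.

Lemma eps_prop (R : ringType) r ext c : ~~ odd (r./2 + odd r + ext) -> validN r ext c ->
  epsN R r c * epsN R r (tauN r c) = -1.
Proof.
move=> hc; case: c => a b; rewrite /validN /tauN /epsN /sel /flip /sgn /=.
repeat (case: ifP => /=); try (move=> *; exfalso; lia).
all: repeat (case: ifP => /=); move=> *; try (exfalso; lia).
all: by rewrite ?mulr1 ?mul1r ?mulrN ?mulNr ?opprK.
Qed.

Definition JL (R : ringType) r ext (L : nat * nat -> R) c : R :=
  if validN r ext c then epsN R r c * L (tauN r c) else 0.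
Definition Bn (R : ringType) r (U V : nat * nat -> R) (c : nat * nat) : R :=
  if ((c.1 < c.2) && (c.2 < r))%N then U (c.1, c.1) * V (c.2, c.2) - U (c.2, c.2) * V (c.1, c.1) else 0.

Lemma flipK v : flip (flip v) = v.
Proof. rewrite /flip; case: ifP; case: ifP; lia. Qed.

Lemma flip_lt v m : (v < m.*2)%N -> (flip v < m.*2)%N.
Proof. rewrite /flip; case: ifP; lia. Qed.

Lemma JLV (R : ringType) r ext L v : (v < (r./2).*2)%N ->
  JL R r ext L (v, v) = sgn v * L (flip v, flip v).
Proof.
move=> hv; rewrite /JL /validN /=; have -> : (v == v) && (v < r + ext)%N by lia.
by rewrite orbT /epsN /tauN eqxx hv.
Qed.

Lemma Bn0 (R : ringType) r U V v : Bn R r U V (v, v) = 0.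
Proof. by rewrite /Bn /= ltnn. Qed.

Lemma sel_zero (R : comRingType) r ext U V t :
  Bn R r (JL R r ext U) V (sel r t) + Bn R r U (JL R r ext V) (sel r t) = 0.
Proof.
rewrite /sel; case: ifP => ht; last by rewrite !Bn0 addr0.
rewrite /Bn /=; have -> : ((t.*2 < t.*2.+1) && (t.*2.+1 < r))%N by lia.
rewrite !JLV; try lia.
have -> : flip t.*2 = t.*2.+1 by rewrite /flip odd_double.
have -> : flip t.*2.+1 = t.*2 by rewrite /flip /= odd_double.
rewrite /sgn /= odd_double /=. ring.
Qed.

Lemma diag_zero (R : comRingType) r ext U V t : (t < r./2)%N ->
  Bn R r U V (t.*2, t.*2.+1) - Bn R r (JL R r ext U) (JL R r ext V) (t.*2, t.*2.+1) = 0.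
Proof.
move=> ht; rewrite /Bn /=; have -> : ((t.*2 < t.*2.+1) && (t.*2.+1 < r))%N by lia.
rewrite !JLV; try lia.
have -> : flip t.*2 = t.*2.+1 by rewrite /flip odd_double.
have -> : flip t.*2.+1 = t.*2 by rewrite /flip /= odd_double.
rewrite /sgn /= odd_double /=. ring.
Qed.

Lemma N_nat (R : comRingType) r ext (Lx Ly : nat * nat -> R) c :
  ~~ odd (r./2 + odd r + ext) -> validN r ext c ->
  Bn R r Lx Ly c + epsN R r c * (Bn R r (JL R r ext Lx) Ly (tauN r c) + Bn R r Lx (JL R r ext Ly) (tauN r c))
  - Bn R r (JL R r ext Lx) (JL R r ext Ly) c = 0.
Proof.
move=> hc; case: c => a b hv.
have {hv} hv : ((a < b < r) || ((a == b) && (a < r + ext)))%N := hv.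
case: (eqVneq a b) => [<-|hab].
  rewrite !Bn0 subr0 add0r.
  have -> : tauN r (a, a) = if (a < (r./2).*2)%N then (flip a, flip a) else sel r (flip (a - r./2)).
    by rewrite /tauN eqxx.
  case: ifP => _; first by rewrite Bn0 Bn0 addr0 mulr0.
  by rewrite sel_zero mulr0.
have hlt : (a < b < r)%N by lia.
case: (eqVneq b (flip a)) => hb.
  have ha : a = (a./2).*2 by move: hb; rewrite /flip; case: ifP; lia.
  have hb' : b = (a./2).*2.+1 by move: hb; rewrite /flip; case: ifP; lia.
  have -> : tauN r (a, b) = sel r (flip a./2) by rewrite /tauN (negbTE hab) hb eqxx.
  rewrite sel_zero mulr0 addr0.
  rewrite ha hb'; apply: diag_zero; lia.
case: (ltnP b (r./2).*2) => hb2.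
  have -> : tauN r (a, b) = (a, flip b) by rewrite /tauN (negbTE hab) (negbTE hb) hb2.
  have -> : epsN R r (a, b) = sgn b by rewrite /epsN (negbTE hab) (negbTE hb) hb2.
  rewrite /Bn /=.
  have -> : ((a < flip b) && (flip b < r))%N by move: hb hb2 hlt; rewrite /flip; case: ifP; case: ifP; lia.
  rewrite hlt !JLV; try lia; try (apply: flip_lt; lia).
  rewrite flipK !sgn_flip /sgn; case: (odd a); case: (odd b); ring.
have hfa : (flip a < (r./2).*2)%N by move: hb2 hlt; rewrite /flip; case: ifP; lia.
have -> : tauN r (a, b) = (flip a, b).
  rewrite /tauN (negbTE hab) (negbTE hb); case: ifP => //; lia.
have -> : epsN R r (a, b) = sgn a.
  rewrite /epsN (negbTE hab) (negbTE hb); case: ifP => //; lia.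
rewrite /Bn /=.
have -> : ((flip a < b) && (b < r))%N by lia.
rewrite hlt !(JLV _ _ _ _ a) ?(JLV _ _ _ _ (flip a)) //; try lia.
rewrite flipK !sgn_flip /sgn; case: (odd a); ring.
Qed.
Lemma generic (R : realType) (T : finType) (br : vec R T -> vec R T -> vec R T)
  r ext (code : T -> nat * nat) (look : vec R T -> nat * nat -> R)
  (hc : ~~ odd (r./2 + odd r + ext))
  (H1 : forall k, validN r ext (code k))
  (H2 : forall c, validN r ext c -> exists k, code k = c)
  (H3 : forall x k, look x (code k) = x k)
  (H4 : forall x c, ~~ validN r ext c -> look x c = 0)
  (H6 : forall x y k, br x y k = Bn R r (look x) (look y) (code k)) :
  exists J, complex_structure br J.
Proof.
pose J (x : vec R T) : vec R T := [ffun k => epsN R r (code k) * look x (tauN r (code k))].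
have lookE : forall x c, look x c = if validN r ext c then look x c else 0.
  move=> x c; case: ifP => // hv; rewrite H4 // hv //.
have lookD : forall x y c, look (x + y) c = look x c + look y c.
  move=> x y c; case: (boolP (validN r ext c)) => hv; last by rewrite !H4 ?addr0.
  by case: (H2 c hv) => k <-; rewrite !H3 !ffunE.
have lookZ : forall a x c, look (a *: x) c = a * look x c.
  move=> a x c; case: (boolP (validN r ext c)) => hv; last by rewrite !H4 ?mulr0.
  by case: (H2 c hv) => k <-; rewrite !H3 !ffunE.
have lookN : forall x c, look (- x) c = - look x c.
  move=> x c; case: (boolP (validN r ext c)) => hv; last by rewrite !H4 ?oppr0.
  by case: (H2 c hv) => k <-; rewrite !H3 !ffunE.
have lookJ : forall x, look (J x) = JL R r ext (look x).
  move=> x; apply: functional_extensionality => c; rewrite /JL.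
  case: (boolP (validN r ext c)) => hv; last by rewrite !H4.
  by case: (H2 c hv) => k <-; rewrite !H3 !ffunE.
have lookB : forall x y, look (br x y) = Bn R r (look x) (look y).
  move=> x y; apply: functional_extensionality => c.
  case: (boolP (validN r ext c)) => hv.
    by case: (H2 c hv) => k <-; rewrite !H3 H6.
  rewrite H4 // /Bn; case: ifP => // h; move: hv; rewrite /validN h //.
exists J; split; [|split].
- move=> a x y; apply/ffunP => k; rewrite !ffunE lookD lookZ; rewrite mulrDr; congr (_ + _); rewrite mulrCA; done.
- move=> x; apply/ffunP => k; rewrite !ffunE lookJ /JL.
  have [hv htt] := tau_prop r ext (code k) hc (H1 k).
  rewrite hv htt H3 mulrA (eps_prop R r ext _ hc (H1 k)); ring.
- move=> x y; apply/ffunP => k; rewrite !ffunE lookD !lookB !lookJ !H6 !lookJ.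
  exact: (N_nat R r ext (look x) (look y) (code k) hc (H1 k)).
Qed.
Definition code0 (r : nat) (k : free2_idx r) : nat * nat :=
  match k with
  | inl i => (nat_of_ord i, nat_of_ord i)
  | inr p => (nat_of_ord (sval p).1, nat_of_ord (sval p).2)
  end.
Arguments code0 {r}.

Definition dec0 (r : nat) (c : nat * nat) : option (free2_idx r) :=
  match (insub c.1 : option 'I_r), (insub c.2 : option 'I_r) with
  | Some i, Some j =>
      if c.1 == c.2 then Some (inl i)
      else match (insub (i, j) : option (pairs r)) with
           | Some p => Some (inr p)
           | None => None
           end
  | _, _ => None
  end.

Lemma code0_valid r (k : free2_idx r) : validN r 0 (code0 k).
Proof.
rewrite /validN; case: k => [i|[[i j] h]] /=.
  by rewrite ltnn eqxx addn0 ltn_ord orbT.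
by rewrite h ltn_ord.
Qed.

Lemma dec0_code r (k : free2_idx r) : dec0 r (code0 k) = Some k.
Proof.
rewrite /dec0; case: k => [i|[[i j] h]] /=.
  by rewrite valK eqxx.
rewrite !valK; have -> : (nat_of_ord i == nat_of_ord j) = false by move: h => /= h; lia.
by rewrite (valK (exist _ (i, j) h)).
Qed.

Lemma code_dec0 r c (k : free2_idx r) : dec0 r c = Some k -> code0 k = c.
Proof.
case: c => a b; rewrite /dec0 /=.
case: insubP => [i _ ei|] //; case: insubP => [j _ ej|] //.
case: ifP => [/eqP eab [<-]|_]; first by rewrite /= ei eab.
case: insubP => [p _ ep|] // [<-] /=.
by rewrite ep /= ei ej.
Qed.

Lemma dec0_some r c : validN r 0 c -> exists k, dec0 r c = Some k.
Proof.
case: c => a b; rewrite /validN /= addn0 => hv.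
have ha : (a < r)%N by lia.
have hb : (b < r)%N by lia.
rewrite /dec0 /= (insubT (fun x => x < r)%N ha) (insubT (fun x => x < r)%N hb).
case: ifP => e; first by eexists.
have hab : (a < b)%N by lia.
rewrite (@insubT _ (fun p : 'I_r * 'I_r => p.1 < p.2)%N (pairs r) (Sub a ha, Sub b hb) hab).
by eexists.
Qed.

Definition look0 (R : realType) r (x : vec R (free2_idx r)) (c : nat * nat) : R :=
  match dec0 r c with Some k => x k | None => 0 end.

Arguments look0 {R r}.

Lemma look0_code (R : realType) r (x : vec R (free2_idx r)) (k : free2_idx r) : look0 x (code0 k) = x k.
Proof. by rewrite /look0 dec0_code. Qed.

Lemma br0_Bn (R : realType) r (x y : vec R (free2_idx r)) k :
  free2_bracket x y k = Bn R r (look0 x) (look0 y) (code0 k).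
Proof.
rewrite ffunE; case: k => [i|[[i j] h]] /=; first by rewrite Bn0.
rewrite /Bn /= h ltn_ord /=.
by rewrite -!(look0_code _ _ x (inl _)) -!(look0_code _ _ y (inl _)).
Qed.

Lemma free_case (R : realType) r : ~~ odd (r./2 + odd r + 0) ->
  exists J, complex_structure (@free2_bracket R r) J.
Proof.
move=> hc; apply: (@generic R _ _ r 0 code0 (@look0 R r) hc).
- exact: code0_valid.
- by move=> c /dec0_some [k /code_dec0 <-]; exists k.
- exact: look0_code.
- move=> x c hv; rewrite /look0; case e: dec0 => [k|] //.
  by move: hv; rewrite -(code_dec0 _ _ _ e) code0_valid.
- exact: br0_Bn.
Qed.

Definition code1 r (k : option (free2_idx r)) : nat * nat :=
  match k with None => (r, r) | Some k => code0 k end.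

Definition look1 (R : realType) r (x : vec R (sum_idx r)) (c : nat * nat) : R :=
  if c == (r, r) then x None else
  match dec0 r c with Some k => x (Some k) | None => 0 end.
Arguments look1 {R r}.

Lemma valid01 r c : validN r 0 c -> validN r 1 c.
Proof. rewrite /validN; lia. Qed.

Lemma code0_ne r (k : free2_idx r) : code0 k != (r, r).
Proof.
apply/negP => /eqP e; have := code0_valid _ k; rewrite e /validN /=; lia.
Qed.

Lemma sum_case (R : realType) r : ~~ odd (r./2 + odd r + 1) ->
  exists J, complex_structure (@sum_bracket R r) J.
Proof.
move=> hc; apply: (@generic R _ _ r 1 (@code1 r) (@look1 R r) hc).
- case=> [k|] /=; first by apply: valid01; apply: code0_valid.
  by rewrite /validN /= eqxx; lia.
- move=> c hv; case: (eqVneq c (r, r)) => [->|hne]; first by exists None.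
  have : validN r 0 c by move: hv hne; case: c => a b; rewrite /validN /= xpair_eqE; lia.
  by case/dec0_some => k /code_dec0 <-; exists (Some k).
- move=> x [k|] /=; last by rewrite /look1 eqxx.
  by rewrite /look1 (negbTE (code0_ne _ k)) dec0_code.
- move=> x c hv; rewrite /look1; case: ifP => [/eqP e|_].
    by move: hv; rewrite e /validN /= eqxx; lia.
  case e: dec0 => [k|] //.
  by move: hv; rewrite -(code_dec0 _ _ _ e) valid01 // code0_valid.
- move=> x y [k|] /=; last by rewrite ffunE Bn0.
  rewrite ffunE /= br0_Bn.
  have hk := code0_valid _ k; move: hk.
  case: (code0 k) => a b hk; rewrite /Bn /=; case: ifP => // hab.
  have eq : forall (z : vec R (sum_idx r)) (d : nat), (d < r)%N -> look0 [ffun k => z (Some k)] (d, d) = look1 z (d, d).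
    move=> z d hd; rewrite /look1 /look0.
    have -> : ((d, d) == (r, r)) = false by apply/negP => /eqP [] ; lia.
    by case: dec0 => // k'; rewrite ffunE.
  rewrite !eq //; lia.
Qed.

Theorem mainTheorem8 (R : realType) (r : nat) (hr : (2 <= r)%N) :
  ((r %% 4 = 0 \/ r %% 4 = 3)%N ->
     exists J, complex_structure (@free2_bracket R r) J) /\
  ((r %% 4 = 1 \/ r %% 4 = 2)%N ->
     exists J, complex_structure (@sum_bracket R r) J).
Proof.
split=> h.
- apply: free_case; lia.
- apply: sum_case; lia.
Qed.
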